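(* Let $q,r,p$ be integers with $1\le q\le p$ and $r\ge1$. Let $s_1,\dots,s_n$ be distinct integers and $w_1,\dots,w_n$ real weights such that $\sum_{i=1}^n w_i\,\frac{s_i^m}{m!} = \delta_{mq}$ for $m=0,1,\dots,q+r-1$ (an order-$r$ accurate stencil for the $q$-th derivative). Let $h\in(0,1]$, $\xi_k\in\mathbb{R}$, and let $I$ be a closed interval containing $\xi_k + h s_i$ for all $i$. Let $N=\max(p+1,q+r)$, let $x\in C^{q+r}(I)$ satisfy $|x^{(l)}(\xi)|\le M_l h^{1-l}$ on $I$ for $1\le l\le q+r$, and let $f\in C^{N}$ on a neighbourhood of $x(I)$ with $|f^{(j)}|\le B$ on $x(I)$ for $1\le j\le N$. Put $x_k=x(\xi_k)$ and $$F_p(x) = f(x) - \sum_{j=0}^{p}\frac{(x-x_k)^j}{j!}f^{(j)}(x_k),\qquad \tilde F_p = F_p\circ x.$$ Then there is a constant $K$ depending only on $p,q,r$, the $s_i$, the $w_i$, $M_1,\dots,M_{q+r}$ and $B$ (not on $h$) such that $$\Big|\,h^{-q}\sum_{i=1}^n w_i\,\tilde F_p(\xi_k+s_i h)\Big|\le K\,h^{p+1-q}.$$ In particular, with $p=r+q-1$ the bound is $K h^{r}$.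
   Context: The exact value of $\tilde F_p^{(q)}(\xi_k)$ is $0$ since $q\le p$; the quantity bounded is therefore the truncation error of the regular-grid stencil applied in the parameter $\xi$ (grid spacing $h$) to the auxiliary function $\tilde F_p$, whose derivatives of orders $1,\dots,p$ at $\xi_k$ all vanish. The hypothesis $x^{(l)}=O(h^{1-l})$ models a spline parametrisation of an irregular grid refined by knot insertion. *)

(* Defs.v *)
From Stdlib Require Import Reals ZArith Arith.
From Coquelicot Require Import Coquelicot.
Open Scope R_scope.

(* sumR n g = g 0 + g 1 + ... + g (n-1)  (indices i = 0..n-1 stand for 1..n) *)
Fixpoint sumR (n : nat) (g : nat -> R) : R :=
  match n with
  | O => 0
  | S k => sumR k g + g k
  end.

(* Derivative of g at t within the set D (one-sided at endpoints of an interval):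
   the difference quotient tends to l as y -> t with y in D, y <> t. *)
Definition is_derive_within (D : R -> Prop) (g : R -> R) (t l : R) : Prop :=
  filterlim (fun y => (g y - g t) / (y - t))
            (within (fun y => D y /\ y <> t) (locally t)) (locally l).

Definition continuous_within (D : R -> Prop) (g : R -> R) (t : R) : Prop :=
  filterlim g (within D (locally t)) (locally (g t)).

Definition Ck_on_within (k : nat) (D : R -> Prop) (g : R -> R) (dg : nat -> R -> R) : Prop :=
  (forall t, D t -> dg O t = g t) /\
  (forall l, (l < k)%nat -> forall t, D t -> is_derive_within D (dg l) t (dg (S l) t)) /\
  (forall t, D t -> continuous_within D (dg k) t).

Definition Ck_on_open (k : nat) (U : R -> Prop) (g : R -> R) (dg : nat -> R -> R) : Prop :=
  open U /\
  (forall y, U y -> dg O y = g y) /\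
  (forall j, (j < k)%nat -> forall y, U y -> is_derive (dg j) y (dg (S j) y)) /\
  (forall y, U y -> continuous (dg k) y).

(* Main.v *)
Require Import Defs.
From Stdlib Require Import Reals ZArith Arith Lra Lia.
From Coquelicot Require Import Coquelicot.
Open Scope R_scope.

Lemma ballR : forall x e y : R, ball x e y <-> Rabs (y - x) < e.
Proof. intros. unfold ball; simpl. unfold AbsRing_ball, abs, minus, plus, opp; simpl. tauto. Qed.

Lemma sumR_abs : forall n g, Rabs (sumR n g) <= sumR n (fun i => Rabs (g i)).
Proof. induction n; intros; simpl. rewrite Rabs_R0; lra.
  eapply Rle_trans. apply Rabs_triang. specialize (IHn g). lra. Qed.

Lemma sumR_le : forall n g g', (forall i, (i < n)%nat -> g i <= g' i) -> sumR n g <= sumR n g'.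
Proof. induction n; intros; simpl. lra.
  assert (sumR n g <= sumR n g') by (apply IHn; intros; apply H; lia).
  assert (g n <= g' n) by (apply H; lia). lra. Qed.

Lemma sumR_mulr : forall n g c, sumR n (fun i => g i * c) = sumR n g * c.
Proof. induction n; intros; simpl. ring. rewrite IHn. ring. Qed.

Lemma dP : forall k (G : nat -> R -> R) y0 z,
  is_derive (fun z => sumR (S k) (fun j => (z-y0)^j / INR (fact j) * G j y0)) z
     (sumR k (fun j => (z-y0)^j / INR (fact j) * G (S j) y0)).
Proof.
  induction k; intros.
  - simpl. apply (is_derive_ext (fun _ => 0 + 1 / 1 * G O y0)).
    intros; simpl; ring. auto_derive. auto. simpl. ring.
  - change (is_derive (fun z => sumR (S k) (fun j => (z-y0)^j / INR (fact j) * G j y0)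
          + (z - y0)^(S k) / INR (fact (S k)) * G (S k) y0) z
       (sumR k (fun j => (z-y0)^j / INR (fact j) * G (S j) y0)
          + (z-y0)^k / INR (fact k) * G (S k) y0)).
    apply is_derive_Reals.
    apply (derivable_pt_lim_plus (fun z => sumR (S k) (fun j => (z-y0)^j / INR (fact j) * G j y0))
      (fun z => (z - y0)^(S k) / INR (fact (S k)) * G (S k) y0)).
    apply is_derive_Reals. apply IHk.
    apply is_derive_Reals.
    assert (Hf : INR (fact k) <> 0) by (apply not_0_INR; apply fact_neq_0).
    assert (HF : INR (fact (S k)) = INR (S k) * INR (fact k)) by (rewrite fact_simpl, mult_INR; reflexivity).
    set (F := INR (fact (S k))) in *. set (c := G (S k) y0).
    auto_derive. auto.
    change (match k with 0%nat => 1 | S _ => INR k + 1 end) with (INR (S k)).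
    rewrite HF. assert (HS: INR (S k) <> 0) by (apply not_0_INR; lia). assert (Hfk := Hf). revert HS Hfk. change ((z - y0)^k) with ((z + - y0)^k). generalize (INR (S k)) (INR (fact k)) ((z + - y0) ^ k). intros. change (@eq R (1 * (r * r1) * / (r * r0) * c) (r1 / r0 * c)). field. auto.
Qed.

Lemma sumR_at0 : forall k (c : nat -> R) y0,
  sumR (S k) (fun j => (y0 - y0)^j / INR (fact j) * c j) = c O.
Proof.
  induction k; intros.
  - simpl. field.
  - change (sumR (S k) (fun j => (y0 - y0)^j / INR (fact j) * c j) +
       (y0 - y0)^(S k) / INR (fact (S k)) * c (S k) = c O).
    rewrite IHk. replace (y0 - y0) with 0 by ring. rewrite pow_i by lia.
    unfold Rdiv. ring.
Qed.

Lemma deriv_cont : forall f z l, is_derive f z l -> continuity_pt f z.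
Proof.
  intros. apply derivable_continuous_pt. exists l. apply is_derive_Reals. auto.
Qed.

Lemma mvt_step : forall (phi phi' : R -> R) lo hi y0 C k,
  lo <= y0 <= hi -> 0 <= C ->
  (forall z, lo <= z <= hi -> is_derive phi z (phi' z)) ->
  phi y0 = 0 ->
  (forall z, lo <= z <= hi -> Rabs (phi' z) <= C * Rabs (z - y0) ^ k) ->
  forall y, lo <= y <= hi -> Rabs (phi y) <= C * Rabs (y - y0) ^ (S k).
Proof.
  intros phi phi' lo hi y0 C k Hy0 HC Hd H0 Hb y Hy.
  destruct (MVT_gen phi y0 y phi') as [c [Hc Heq]].
  - intros z Hz. apply Hd. unfold Rmin, Rmax in Hz. destruct (Rle_dec y0 y); lra.
  - intros z Hz. apply deriv_cont with (phi' z). apply Hd.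
    unfold Rmin, Rmax in Hz. destruct (Rle_dec y0 y); lra.
  - assert (Hcin : lo <= c <= hi) by (unfold Rmin, Rmax in Hc; destruct (Rle_dec y0 y); lra).
    assert (Hcy : Rabs (c - y0) <= Rabs (y - y0)).
    { unfold Rmin, Rmax in Hc; destruct (Rle_dec y0 y); split_Rabs; lra. }
    rewrite H0, Rminus_0_r in Heq. rewrite Heq, Rabs_mult. simpl.
    specialize (Hb c Hcin).
    assert (Rabs (c - y0) ^ k <= Rabs (y - y0) ^ k) by (apply pow_incr; split; auto; apply Rabs_pos).
    assert (0 <= Rabs (y - y0)) by apply Rabs_pos.
    assert (Rabs (phi' c) <= C * Rabs (y - y0) ^ k).
    { eapply Rle_trans. apply Hb. apply Rmult_le_compat_l; auto. }
    assert (Rabs (phi' c) * Rabs (y - y0) <= C * Rabs (y - y0) ^ k * Rabs (y - y0))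
      by (apply Rmult_le_compat_r; auto).
    lra.
Qed.

Lemma taylor_bound : forall k (G : nat -> R -> R) lo hi y0 B,
  lo <= y0 <= hi -> 0 <= B ->
  (forall j, (j <= k)%nat -> forall z, lo <= z <= hi -> is_derive (G j) z (G (S j) z)) ->
  (forall z, lo <= z <= hi -> Rabs (G (S k) z) <= B) ->
  forall y, lo <= y <= hi ->
  Rabs (G O y - sumR (S k) (fun j => (y - y0)^j / INR (fact j) * G j y0))
    <= B * Rabs (y - y0) ^ (S k).
Proof.
  induction k; intros G lo hi y0 B Hy0 HB Hd Hb.
  - apply (mvt_step (fun y => G O y - sumR 1 (fun j => (y - y0)^j / INR (fact j) * G j y0))
                    (fun y => G 1%nat y - sumR 0 (fun j => (y - y0)^j / INR (fact j) * G (S j) y0))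
                    lo hi y0 B 0); auto.
    + intros z Hz. apply is_derive_Reals. apply derivable_pt_lim_minus.
      apply is_derive_Reals. apply Hd; auto.
      apply is_derive_Reals. apply dP.
    + rewrite sumR_at0. ring.
    + intros z Hz. simpl. rewrite Rminus_0_r. rewrite Rmult_1_r. auto.
  - apply (mvt_step (fun y => G O y - sumR (S (S k)) (fun j => (y - y0)^j / INR (fact j) * G j y0))
                    (fun y => G 1%nat y - sumR (S k) (fun j => (y - y0)^j / INR (fact j) * G (S j) y0))
                    lo hi y0 B (S k)); auto.
    + intros z Hz. apply is_derive_Reals. apply derivable_pt_lim_minus.
      apply is_derive_Reals. apply Hd; auto. lia.
      apply is_derive_Reals. apply dP.
    + rewrite sumR_at0. ring.
    + intros z Hz.
      apply (IHk (fun j => G (S j)) lo hi y0 B); auto.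
      intros j Hj z' Hz'. apply Hd; auto. lia.
Qed.

Lemma within_eps : forall (D : R -> Prop) g t l (eps : posreal),
  is_derive_within D g t l ->
  exists d : posreal, forall y, Rabs (y - t) < d -> D y -> y <> t ->
    Rabs ((g y - g t) / (y - t) - l) < eps.
Proof.
  intros D g t l eps H. unfold is_derive_within in H.
  apply filterlim_locally with (eps := eps) in H.
  destruct H as [d Hd]. exists d. intros y Hy HD Hne.
  specialize (Hd y). rewrite ballR in Hd. specialize (Hd Hy (conj HD Hne)).
  rewrite ballR in Hd. exact Hd.
Qed.

Lemma interior_deriv : forall a b g t l,
  a < t < b -> is_derive_within (fun t => a <= t <= b) g t l -> derivable_pt_lim g t l.
Proof.
  intros a b g t l Ht H eps Heps.
  destruct (within_eps _ g t l (mkposreal eps Heps) H) as [d Hd].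
  assert (Hpos : 0 < Rmin d (Rmin (t - a) (b - t))).
  { apply Rmin_pos. apply cond_pos. apply Rmin_pos; lra. }
  exists (mkposreal _ Hpos). intros hh Hh0 Hh. simpl in Hh.
  assert (H1 := Rmin_l d (Rmin (t - a) (b - t))).
  assert (H2 := Rmin_r d (Rmin (t - a) (b - t))).
  assert (H3 := Rmin_l (t - a) (b - t)).
  assert (H4 := Rmin_r (t - a) (b - t)).
  specialize (Hd (t + hh)). replace (t + hh - t) with hh in Hd by ring.
  apply Hd.
  - lra.
  - split_Rabs; lra.
  - lra.
Qed.

Lemma local_lip : forall (D : R -> Prop) g t l,
  is_derive_within D g t l ->
  exists d : posreal, forall y, Rabs (y - t) < d -> D y ->
    Rabs (g y - g t) <= (Rabs l + 1) * Rabs (y - t).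
Proof.
  intros D g t l H.
  destruct (within_eps D g t l (mkposreal 1 Rlt_0_1) H) as [d Hd].
  exists d. intros y Hy HD.
  destruct (Req_dec y t) as [E|E].
  - subst. replace (t - t) with 0 by ring. rewrite Rminus_diag, Rabs_R0. lra.
  - specialize (Hd y Hy HD E). simpl in Hd.
    assert (Hne : y - t <> 0) by lra.
    replace (g y - g t) with ((g y - g t) / (y - t) * (y - t)) by (field; auto).
    rewrite Rabs_mult. apply Rmult_le_compat_r. apply Rabs_pos.
    assert (HH := Rabs_triang_inv ((g y - g t) / (y - t)) l). lra.
Qed.

Lemma lip_int : forall a b (g g' : R -> R) L,
  (forall t, a <= t <= b -> is_derive_within (fun t => a <= t <= b) g t (g' t)) ->
  (forall t, a <= t <= b -> Rabs (g' t) <= L) ->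
  forall c d, a < c -> c < d -> d < b -> Rabs (g d - g c) <= L * (d - c).
Proof.
  intros a b g g' L Hd Hb c d Hc Hcd Hdb.
  destruct (MVT_cor2 g g' c d Hcd) as [z [Hz Hzi]].
  - intros z Hz. apply (interior_deriv a b). lra. apply Hd. lra.
  - rewrite Hz, Rabs_mult. rewrite (Rabs_right (d - c)) by lra.
    apply Rmult_le_compat_r. lra. apply Hb. lra.
Qed.

Lemma lip : forall a b (g g' : R -> R) L, a <= b ->
  (forall t, a <= t <= b -> is_derive_within (fun t => a <= t <= b) g t (g' t)) ->
  (forall t, a <= t <= b -> Rabs (g' t) <= L) ->
  forall u v, a <= u <= b -> a <= v <= b -> Rabs (g v - g u) <= L * Rabs (v - u).
Proof.
  intros a b g g' L Hab Hd Hb.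
  assert (HL : 0 <= L) by (eapply Rle_trans; [apply Rabs_pos | apply (Hb a)]; lra).
  assert (Hmain : forall u v, a <= u <= b -> a <= v <= b -> u < v ->
            Rabs (g v - g u) <= L * (v - u)).
  { intros u v Hu Hv Huv. apply Rle_plus_epsilon. intros eps Heps.
    destruct (local_lip _ g u (g' u) (Hd u Hu)) as [du Hdu].
    destruct (local_lip _ g v (g' v) (Hd v Hv)) as [dv Hdv].
    set (Lu := Rabs (g' u) + 1). set (Lv := Rabs (g' v) + 1).
    assert (HLu : 0 < Lu) by (unfold Lu; pose proof (Rabs_pos (g' u)); lra).
    assert (HLv : 0 < Lv) by (unfold Lv; pose proof (Rabs_pos (g' v)); lra).
    set (rho := Rmin (Rmin ((v - u) / 3) (du / 2)) (Rmin (dv / 2) (eps / (2 * (Lu + Lv))))).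
    assert (Hr1 := Rmin_l (Rmin ((v - u) / 3) (du / 2)) (Rmin (dv / 2) (eps / (2 * (Lu + Lv))))).
    assert (Hr2 := Rmin_r (Rmin ((v - u) / 3) (du / 2)) (Rmin (dv / 2) (eps / (2 * (Lu + Lv))))).
    assert (Hr3 := Rmin_l ((v - u) / 3) (du / 2)).
    assert (Hr4 := Rmin_r ((v - u) / 3) (du / 2)).
    assert (Hr5 := Rmin_l (dv / 2) (eps / (2 * (Lu + Lv)))).
    assert (Hr6 := Rmin_r (dv / 2) (eps / (2 * (Lu + Lv)))).
    fold rho in Hr1, Hr2.
    assert (Hrpos : 0 < rho).
    { unfold rho. apply Rmin_pos; apply Rmin_pos; try lra.
      pose proof (cond_pos du); lra. pose proof (cond_pos dv); lra.
      apply Rdiv_lt_0_compat; lra. }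
    assert (Hre : (Lu + Lv) * rho <= eps / 2).
    { assert (rho <= eps / (2 * (Lu + Lv))) by lra.
      apply Rmult_le_compat_l with (r := Lu + Lv) in H; [| lra].
      replace ((Lu + Lv) * (eps / (2 * (Lu + Lv)))) with (eps / 2) in H by (field; lra).
      exact H. }
    set (c := u + rho). set (d := v - rho).
    assert (H1 : Rabs (g c - g u) <= Lu * Rabs (c - u)).
    { apply Hdu. unfold c. rewrite Rabs_right; lra. unfold c; lra. }
    assert (H2 : Rabs (g d - g v) <= Lv * Rabs (d - v)).
    { apply Hdv. unfold d. rewrite Rabs_left; lra. unfold d; lra. }
    assert (H3 : Rabs (g d - g c) <= L * (d - c)).
    { apply (lip_int a b g g'); auto; unfold c, d; lra. }
    replace (c - u) with rho in H1 by (unfold c; ring).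
    replace (d - v) with (- rho) in H2 by (unfold d; ring).
    rewrite (Rabs_right rho) in H1 by lra. rewrite Rabs_Ropp, (Rabs_right rho) in H2 by lra.
    assert (Rabs (g v - g u) <= Rabs (g d - g v) + Rabs (g d - g c) + Rabs (g c - g u)).
    { replace (g v - g u) with (-(g d - g v) + (g d - g c) + (g c - g u)) by ring.
      pose proof (Rabs_triang (- (g d - g v) + (g d - g c)) (g c - g u)).
      pose proof (Rabs_triang (- (g d - g v)) (g d - g c)).
      pose proof (Rabs_Ropp (g d - g v)). lra. }
    assert (L * (d - c) <= L * (v - u)) by (apply Rmult_le_compat_l; unfold c, d; lra).
    assert (Lu * rho + Lv * rho <= eps / 2) by lra. lra. }
  intros u v Hu Hv.
  destruct (Rtotal_order u v) as [H|[H|H]].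
  - rewrite (Rabs_right (v - u)) by lra. auto.
  - subst. rewrite !Rminus_diag, Rabs_R0. lra.
  - rewrite Rabs_minus_sym, (Rabs_left (v - u)) by lra.
    replace (- (v - u)) with (u - v) by ring. auto.
Qed.

Lemma clamp_lip : forall a b u v, a <= b ->
  Rabs (Rmax a (Rmin b u) - Rmax a (Rmin b v)) <= Rabs (u - v).
Proof.
  intros. unfold Rmax, Rmin.
  repeat (destruct (Rle_dec _ _)); split_Rabs; lra.
Qed.

Lemma range : forall a b (g : R -> R) L, a <= b -> 0 <= L ->
  (forall u v, a <= u <= b -> a <= v <= b -> Rabs (g v - g u) <= L * Rabs (v - u)) ->
  forall t1 t2 z, a <= t1 <= b -> a <= t2 <= b ->
  Rmin (g t1) (g t2) <= z <= Rmax (g t1) (g t2) ->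
  exists tau, a <= tau <= b /\ g tau = z.
Proof.
  intros a b g L Hab HL Hl t1 t2 z H1 H2 Hz.
  set (gt := fun u => g (Rmax a (Rmin b u))).
  assert (Hcl : forall u, a <= u <= b -> Rmax a (Rmin b u) = u).
  { intros u Hu. unfold Rmax, Rmin. repeat (destruct (Rle_dec _ _)); lra. }
  assert (Hcin : forall u, a <= Rmax a (Rmin b u) <= b).
  { intros u. unfold Rmax, Rmin. repeat (destruct (Rle_dec _ _)); lra. }
  assert (Hc : continuity gt).
  { intros x0. apply continuity_pt_locally. intros eps.
    assert (Hp : 0 < eps / (L + 1)) by (apply Rdiv_lt_0_compat; [apply cond_pos | lra]).
    exists (mkposreal _ Hp). intros y Hy. rewrite ballR in Hy. simpl in Hy.
    unfold gt. eapply Rle_lt_trans. apply Hl; apply Hcin.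
    eapply Rle_lt_trans. apply Rmult_le_compat_l. auto. apply (clamp_lip a b y x0 Hab).
    apply Rle_lt_trans with ((L + 1) * Rabs (y - x0)).
    apply Rmult_le_compat_r. apply Rabs_pos. lra.
    apply Rmult_lt_compat_l with (r := L + 1) in Hy; [|lra].
    replace ((L + 1) * (eps / (L + 1))) with (pos eps) in Hy by (field; lra). exact Hy. }
  assert (E1 : gt t1 = g t1) by (unfold gt; rewrite Hcl; auto).
  assert (E2 : gt t2 = g t2) by (unfold gt; rewrite Hcl; auto).
  rewrite <- E1, <- E2 in Hz.
  destruct (IVT_gen gt t1 t2 z Hc Hz) as [tau [Ht Hgt]].
  assert (Htin : a <= tau <= b) by (unfold Rmin, Rmax in Ht; destruct (Rle_dec t1 t2); lra).
  exists tau. split; auto. unfold gt in Hgt. rewrite Hcl in Hgt; auto.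
Qed.

Theorem mainTheorem4 :
  forall (q r p n : nat) (s : nat -> Z) (w : nat -> R) (M : nat -> R) (B : R),
    (1 <= q)%nat -> (q <= p)%nat -> (1 <= r)%nat ->
    (forall i j, (i < n)%nat -> (j < n)%nat -> i <> j -> s i <> s j) ->
    (forall m, (m < q + r)%nat ->
       sumR n (fun i => w i * IZR (s i) ^ m / INR (fact m))
       = if Nat.eqb m q then 1 else 0) ->
    exists K : R,
      forall (h xi a b : R) (x f : R -> R) (dx df : nat -> R -> R) (U : R -> Prop),
        0 < h -> h <= 1 -> a <= b -> a <= xi <= b ->
        (forall i, (i < n)%nat -> a <= xi + h * IZR (s i) <= b) ->
        Ck_on_within (q + r) (fun t => a <= t <= b) x dx ->
        (forall l, (1 <= l <= q + r)%nat -> forall t, a <= t <= b ->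
           Rabs (dx l t) <= M l * powerRZ h (1 - Z.of_nat l)) ->
        (forall t, a <= t <= b -> U (x t)) ->
        Ck_on_open (Nat.max (p + 1) (q + r)) U f df ->
        (forall j, (1 <= j <= Nat.max (p + 1) (q + r))%nat -> forall t, a <= t <= b ->
           Rabs (df j (x t)) <= B) ->
        let Ft := fun t => f (x t) - sumR (p + 1)
                     (fun j => (x t - x xi) ^ j / INR (fact j) * df j (x xi)) in
        Rabs (/ h ^ q * sumR n (fun i => w i * Ft (xi + IZR (s i) * h)))
          <= K * h ^ (p + 1 - q).
Proof.
  intros q r p n s w M B Hq Hqp Hr _ _.
  exists (sumR n (fun i => Rabs (w i) * (B * (M 1%nat * Rabs (IZR (s i))) ^ (p + 1)))).
  intros h xi a b x f dx df U Hh0 Hh1 Hab Hxi Hpts [Hx0 [Hxd Hxc]] HM HU [HUo [Hf0 [Hfd Hfc]]] HB Ft.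
  assert (HM1 : forall t, a <= t <= b -> Rabs (dx 1%nat t) <= M 1%nat).
  { intros t Ht. pose proof (HM 1%nat ltac:(lia) t Ht) as H. simpl in H. lra. }
  assert (HM1p : 0 <= M 1%nat) by (eapply Rle_trans; [apply Rabs_pos | apply (HM1 a); lra]).
  assert (HBp : 0 <= B).
  { eapply Rle_trans; [apply Rabs_pos | apply (HB 1%nat ltac:(lia) a); lra]. }
  assert (Hd0 : forall t, a <= t <= b ->
            is_derive_within (fun t => a <= t <= b) (dx 0%nat) t (dx 1%nat t)).
  { intros t Ht. apply Hxd; auto. lia. }
  assert (Hlip := lip a b (dx 0%nat) (dx 1%nat) (M 1%nat) Hab Hd0 HM1).
  assert (Hlipx : forall u v, a <= u <= b -> a <= v <= b ->
            Rabs (x v - x u) <= M 1%nat * Rabs (v - u)).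
  { intros u v Hu Hv. rewrite <- (Hx0 u Hu), <- (Hx0 v Hv). auto. }
  assert (Hpt : forall t, a <= t <= b -> Rabs (Ft t) <= B * Rabs (x t - x xi) ^ (p + 1)).
  { intros t Ht.
    assert (Hin : forall z, Rmin (x xi) (x t) <= z <= Rmax (x xi) (x t) ->
                   exists tau, a <= tau <= b /\ x tau = z).
    { intros z Hz. rewrite <- (Hx0 xi Hxi), <- (Hx0 t Ht) in Hz.
      destruct (range a b (dx 0%nat) (M 1%nat) Hab HM1p Hlip xi t z Hxi Ht Hz) as [tau [H1 H2]].
      exists tau. split; auto. rewrite <- Hx0; auto. }
    assert (Ht0 := taylor_bound p df (Rmin (x xi) (x t)) (Rmax (x xi) (x t)) (x xi) B).
    unfold Ft. rewrite Nat.add_1_r. rewrite <- (Hf0 (x t) (HU t Ht)).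
    apply Ht0; auto.
    - split; [apply Rmin_l | apply Rmax_l].
    - intros j Hj z Hz. destruct (Hin z Hz) as [tau [H1 H2]]. subst z.
      apply Hfd. lia. auto.
    - intros z Hz. destruct (Hin z Hz) as [tau [H1 H2]]. subst z.
      apply HB; auto. lia.
    - split; [apply Rmin_r | apply Rmax_r]. }
  assert (Hterm : forall i, (i < n)%nat ->
     Rabs (w i * Ft (xi + IZR (s i) * h)) <=
     Rabs (w i) * (B * (M 1%nat * Rabs (IZR (s i))) ^ (p + 1)) * h ^ (p + 1)).
  { intros i Hi.
    assert (Hti : a <= xi + IZR (s i) * h <= b) by (rewrite Rmult_comm; apply Hpts; auto).
    rewrite Rabs_mult, Rmult_assoc. apply Rmult_le_compat_l. apply Rabs_pos.
    eapply Rle_trans. apply Hpt; auto.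
    rewrite Rmult_assoc, <- Rpow_mult_distr. apply Rmult_le_compat_l; auto.
    apply pow_incr. split. apply Rabs_pos.
    eapply Rle_trans. apply Hlipx; auto.
    replace (xi + IZR (s i) * h - xi) with (IZR (s i) * h) by ring.
    rewrite Rabs_mult, (Rabs_right h) by lra. lra. }
  assert (Hhq : 0 < h ^ q) by (apply pow_lt; lra).
  rewrite Rabs_mult, Rabs_right by (apply Rle_ge; left; apply Rinv_0_lt_compat; auto).
  eapply Rle_trans.
  { apply Rmult_le_compat_l. left; apply Rinv_0_lt_compat; auto.
    eapply Rle_trans. apply sumR_abs. apply sumR_le. exact Hterm. }
  rewrite sumR_mulr.
  assert (Hp : h ^ (p + 1) = h ^ (p + 1 - q) * h ^ q) by (rewrite <- pow_add; f_equal; lia).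
  rewrite Hp. right. field. lra.
Qed.
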